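(* Let $\Sigma$ be a topological Markov chain with shift $\sigma$ and $\mu$ a Gibbs measure on $\Sigma$ for a H\''older continuous potential (as in the context). Let $\{l_n\}$ be a sequence of natural numbers with $l_n\to\infty$. Then there exists a sequence of cylinders $\{C_n\}$, $C_n$ defined on an interval $\Lambda_n$, with $\sum_n\mu(C_n)=\infty$, such that the sequence $\{\Lambda_n\}$ is $\{l_n\}$-centered and $\{C_n\}$ does not satisfy condition (SP). Likewise, there exists such a sequence of cylinders with $\sum_n\mu(C_n)=\infty$ defined on an $\{l_n\}$-aligned sequence of intervals which does not satisfy (SP).
   Context: Let $M\ge2$ and $\mathbf A$ an $M\times M$ zero-one matrix with $\mathbf A^K$ entrywise positive for some $K\ge1$; $\Sigma=\{\underline\omega\in\{1,\dots,M\}^{\mathbb Z}:\mathbf A_{\omega_i\omega_{i+1}}=1\ \forall i\}$ with product topology and left shift $(\sigma\underline\omega)_i=\omega_{i+1}$; $\mu$ is the unique $\sigma$-invariant Gibbs measure of a H\''older continuous function on $\Sigma$ (H\''older w.r.t. $d_a(\underline\omega,\underline\omega')=a^n$, $n=\max\{n:\omega_i=\omega_i'\ \forall|i|<n\}$). A cylinder defined on $\Lambda=[n^-,n^+]\subset\mathbb Z$ is $\{\underline\omega'\in\Sigma:\omega_i'=\omega_i,\ n^-\le i\le n^+\}$ for fixed symbols $\omega_i$. A sequence of intervals $\{\Lambda_n\}$ is $\{l_n\}$-centered if the center $(n^-+n^+)/2$ of $\Lambda_n$ lies in $[-l_n/2,l_n/2]$ for all $n$, and $\{l_n\}$-aligned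 if the left endpoint of $\Lambda_n$ lies in $[0,l_n]$ for all $n$. For sets $A_n$ let $R_{mn}=\mu(\sigma^{-m}A_m\cap\sigma^{-n}A_n)-\mu(A_m)\mu(A_n)$; condition (SP) means: there is $C>0$ with $\sum_{m,n=M'}^NR_{mn}\le C\sum_{n=M'}^N\mu(A_n)$ for all $N\ge M'\ge1$. *)

(* Defs.v *)
From HB Require Import structures.
From mathcomp Require Import all_boot all_order all_algebra.
From mathcomp Require Import all_classical all_reals all_analysis.
Set Implicit Arguments. Unset Strict Implicit. Unset Printing Implicit Defensive.
Import Order.TTheory GRing.Theory Num.Theory.
Local Open Scope classical_set_scope.
Local Open Scope ring_scope.

(* Symbols {1,...,M} are represented by 'I_M = {0,...,M-1}; M = k.+2 >= 2. *)
Definition config (M : nat) := int -> 'I_M.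
Definition cfg (k : nat) := config k.+2.
HB.instance Definition _ (k : nat) := Choice.on (cfg k).
HB.instance Definition _ (k : nat) :=
  isPointed.Build (cfg k) (fun _ => ord0 : 'I_k.+2).

Definition shiftn (M : nat) (m : nat) (w : config M) : config M :=
  fun i => w (i + m%:Z).

Definition preshift (M : nat) (m : nat) (A : set (config M)) : set (config M) :=
  [set w | A (shiftn m w)].

Definition fcyl (M : nat) (a b : int) (w : config M) : set (config M) :=
  [set w' | forall i : int, a <= i <= b -> w' i = w i].

Definition cylinders (M : nat) : set (set (config M)) :=
  [set C | exists a b w, C = @fcyl M a b w].

(* the measurable space ({1..M}^Z, product sigma-algebra) *)
Definition SpaceZ (k : nat) := g_sigma_algebraType (@cylinders k.+2 : set (set (cfg k))).

Definition SigmaA (k : nat) (A : 'M[int]_k.+2) : set (config k.+2) :=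
  [set w | forall i : int, A (w i) (w (i + 1)) = 1].

Definition primitive01 (k : nat) (A : 'M[int]_k.+2) : Prop :=
  (forall i j, A i j = 0 \/ A i j = 1) /\
  exists K : nat, (1 <= K)%N /\ forall i j, 0 < (A ^+ K) i j.

(* Hoelder continuity on Sigma w.r.t. some metric d_a (0<a<1):
   |phi w - phi w'| <= C d_a(w,w'), where d_a(w,w') = a^n,
   n = max{n : w_i = w'_i for all |i| < n}. *)
Definition holder_potential (R : realType) (k : nat) (A : 'M[int]_k.+2)
  (phi : config k.+2 -> R) : Prop :=
  exists (a C : R), 0 < a < 1 /\ 0 <= C /\
    forall w w', SigmaA A w -> SigmaA A w' ->
      forall n : nat, (forall i : int, `|i| < n%:Z -> w i = w' i) ->
        `|phi w - phi w'| <= C * a ^+ n.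

Definition birkhoff (R : realType) (M : nat) (phi : config M -> R) (m : nat)
  (w : config M) : R := \sum_(j < m) phi (shiftn j w).

Definition invariant_gibbs (R : realType) (k : nat) (A : 'M[int]_k.+2)
  (phi : config k.+2 -> R) (mu : probability (SpaceZ k) R) : Prop :=
  [/\ mu (SigmaA A) = 1%E,
      (forall X : set (SpaceZ k), measurable X ->
         mu (preshift 1 X) = mu X) &
      exists (P c : R), 1 <= c /\
        forall (w : config k.+2) (m : nat), SigmaA A w -> (1 <= m)%N ->
          let g := expR (- (P * m%:R) + birkhoff phi m w) in
          (c^-1 * g <= fine (mu (SigmaA A `&` fcyl 0 (m%:Z - 1) w)) <= c * g)].

Definition cyl (k : nat) (A : 'M[int]_k.+2) (a b : int) (w : config k.+2)
  : set (config k.+2) := SigmaA A `&` fcyl a b w.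

Definition Rmn (R : realType) (k : nat) (mu : probability (SpaceZ k) R)
  (S : nat -> set (config k.+2)) (m n : nat) : R :=
  fine (mu (preshift m (S m) `&` preshift n (S n)))
  - fine (mu (S m)) * fine (mu (S n)).

Definition SP (R : realType) (k : nat) (mu : probability (SpaceZ k) R)
  (S : nat -> set (config k.+2)) : Prop :=
  exists C : R, 0 < C /\
    forall M' N : nat, (1 <= M')%N -> (M' <= N)%N ->
      \sum_(M' <= m < N.+1) \sum_(M' <= n < N.+1) Rmn mu S m n
        <= C * \sum_(M' <= n < N.+1) fine (mu (S n)).

(* {l_n}-centered: center (a_n+b_n)/2 in [-l_n/2, l_n/2] *)
Definition centered (a b : nat -> int) (l : nat -> nat) : Prop :=
  forall n, `|a n + b n| <= (l n)%:Z.

Definition aligned (a : nat -> int) (l : nat -> nat) : Prop :=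
  forall n, 0 <= a n <= (l n)%:Z.

(* Main.v *)
Require Import Defs.
From HB Require Import structures.
From mathcomp Require Import all_boot all_order all_algebra.
From mathcomp Require Import all_classical all_reals all_analysis.
From mathcomp Require Import zify ring lra.
Set Implicit Arguments. Unset Strict Implicit.
Fixpoint Np (N : nat -> nat) (j : nat) : nat :=
  match j with
  | 0 => (N 0).+1
  | j'.+1 => maxn (Np N j' + j').+1 (N j'.+1)
  end.

Lemma NpN N j : N j <= Np N j.
Proof. case: j => [|j] /=; lia. Qed.

Lemma NpS N j : Np N j + j < Np N j.+1.
Proof. rewrite /=; lia. Qed.

Lemma Npgt N j : j < Np N j.
Proof. elim: j => [|j IH] /=; lia. Qed.

Lemma Npmono N j1 j2 : j1 < j2 -> Np N j1 + j1 < Np N j2.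
Proof.
elim: j2 => // j2 IH; rewrite ltnS leq_eqVlt => /orP[/eqP ->|h].
  exact: NpS.
have := IH h; have := NpS N j2; lia.
Qed.

Definition aseq (N : nat -> nat) (n : nat) : nat :=
  \max_(j < n.+1 | Np N j <= n) ((Np N j + j).-1 - n).

Lemma aseq_bound (N l : nat -> nat) n :
  (forall j m, N j <= m -> 2 * j <= l m) -> 2 * aseq N n <= l n.
Proof.
move=> hN.
have : aseq N n <= l n %/ 2.
  apply/bigmax_leqP => j hj.
  have := hN j n (leq_trans (NpN N j) hj); lia.
lia.
Qed.

Lemma aseq_block N j0 n : Np N j0 <= n < Np N j0 + j0 ->
  aseq N n = (Np N j0 + j0).-1 - n.
Proof.
move=> /andP[h1 h2]; have hj0 : j0 < n.+1 by have := Npgt N j0; lia.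
apply/eqP; rewrite eqn_leq; apply/andP; split.
  apply/bigmax_leqP => j hj.
  case: (ltngtP j j0) => [hlt|hgt|->] //.
    have := Npmono N hlt; lia.
  have := Npmono N hgt; lia.
exact: (@leq_bigmax_cond _ (fun j : 'I_n.+1 => Np N j <= n)
          (fun j : 'I_n.+1 => (Np N j + j).-1 - n) (Ordinal hj0) h1).
Qed.
Lemma blk_facts N j0 : 0 < j0 ->
  [/\ 1 <= Np N j0, Np N j0 <= (Np N j0 + j0).-1 &
      ((Np N j0 + j0).-1.+1 - Np N j0 = j0)].
Proof. move=> h; have := Npgt N j0; move: (Np N j0) => x hx; split; lia. Qed.

Lemma blk_a N j0 m : 0 < j0 ->
  Np N j0 <= m < ((Np N j0 + j0).-1).+1 -> aseq N m + m = (Np N j0 + j0).-1.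
Proof.
move=> h hm; rewrite (@aseq_block N j0 m); move: hm; move: (Np N j0) => x; lia.
Qed.

Import Order.TTheory GRing.Theory Num.Theory.
Local Open Scope classical_set_scope.
Local Open Scope ring_scope.

Lemma path_of_pow (k : nat) (A : 'M[int]_k.+2) :
  (forall i j, A i j = 0 \/ A i j = 1) ->
  forall (n : nat) (i j : 'I_k.+2), 0 < (A ^+ n) i j ->
  exists f : nat -> 'I_k.+2, [/\ f 0%N = i, f n = j &
     forall r, (r < n)%N -> A (f r) (f r.+1) = 1].
Proof.
move=> A01; elim=> [|n IH] i j.
  rewrite expr0 mxE; case: eqP => [->|]; last by rewrite ltxx.
  by move=> _; exists (fun _ => j); split.
rewrite exprSr mxE => hpos.
have [x hx] : exists x, 0 < (A ^+ n) i x * A x j.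
  apply/not_existsP => hn; move: hpos; apply/negP; rewrite -leNgt.
  by apply: sumr_le0 => x _; rewrite leNgt; apply/negP; apply: hn.
have [Axj|Axj] := A01 x j; first by move: hx; rewrite Axj mulr0 ltxx.
move: hx; rewrite Axj mulr1 => /IH [f [f0 fn fA]].
exists (fun r => if (r <= n)%N then f r else j); split => //=.
- by rewrite ltnn.
- move=> r rn; have rn' : (r <= n)%N by rewrite -ltnS.
  rewrite rn'; case: (ltngtP r n) rn' => // [rn2 _|-> _].
    exact: fA.
  by rewrite fn.
Qed.

Lemma periodic_point (k : nat) (A : 'M[int]_k.+2) :
  primitive01 A -> forall t : 'I_k.+2, exists w, SigmaA A w /\ w 0 = t.
Proof.
move=> [A01 [K [K1 AK]]] t.
have [f [f0 fK fA]] := @path_of_pow k A A01 K t t (AK t t).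
exists (fun i => f (absz (i %% K%:Z)%Z)); split; last by rewrite mod0z /= f0.
move=> i /=.
have Kpos : (0 < K)%N by [].
set r := absz (i %% K%:Z)%Z.
have hr : (i %% K%:Z)%Z = r%:Z.
  by rewrite /r gez0_abs // modz_ge0 // eqz_nat -lt0n.
have rK : (r < K)%N.
  have : (i %% K%:Z < K%:Z)%Z by apply: ltz_pmod; rewrite ltz_nat.
  by rewrite hr ltz_nat.
have -> : absz ((i + 1) %% K%:Z)%Z = (r.+1 %% K)%N.
  by rewrite -modzDml hr -(PoszD r 1) modz_nat addn1.
have [rK'|rK'] : (r.+1 < K)%N \/ r.+1 = K by lia.
  by rewrite modn_small // fA.
by rewrite rK' modnn f0 -fK -rK' fA.
Qed.

Definition Ecyl (k : nat) (A : 'M[int]_k.+2) (i : int) (s : 'I_k.+2)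
  : set (config k.+2) := SigmaA A `&` fcyl i i (fun _ => s).

Lemma fcyl1 (M : nat) (i : int) (u : config M) (w : config M) :
  fcyl i i u w <-> w i = u i.
Proof.
split; first by apply; rewrite lexx.
by move=> h j /andP[h1 h2]; have -> : j = i by apply/eqP; rewrite eq_le h1 h2.
Qed.

Lemma SigmaA_shift (k : nat) (A : 'M[int]_k.+2) n w :
  SigmaA A (shiftn n w) <-> SigmaA A w.
Proof.
split => h j.
  have := h (j - n%:Z); rewrite /shiftn.
  have -> : j - n%:Z + n%:Z = j by lia.
  by have -> : j - n%:Z + 1 + n%:Z = j + 1 by lia.
rewrite /shiftn; have -> : j + 1 + n%:Z = (j + n%:Z) + 1 by lia.
exact: h.
Qed.

Lemma preshift_E (k : nat) (A : 'M[int]_k.+2) n i s :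
  preshift n (Ecyl A i s) = Ecyl A (i + n%:Z) s.
Proof.
apply/seteqP; split => w /= [hS hc]; split.
- by move: hS; rewrite SigmaA_shift.
- by apply/fcyl1; move/fcyl1: hc.
- by rewrite SigmaA_shift.
- by apply/fcyl1; move/fcyl1: hc.
Qed.

Lemma mfcyl (k : nat) a b (w : config k.+2) :
  measurable (fcyl a b w : set (SpaceZ k)).
Proof. by apply: sub_sigma_algebra; exists a, b, w. Qed.

Definition Stp (k : nat) (A : 'M[int]_k.+2) (i : int) : set (config k.+2) :=
  \bigcup_(s in [set s : 'I_k.+2 * 'I_k.+2 | A s.1 s.2 = 1])
     (fcyl i i (fun _ => s.1) `&` fcyl (i+1) (i+1) (fun _ => s.2)).

Lemma mSigmaA (k : nat) (A : 'M[int]_k.+2) :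
  measurable (SigmaA A : set (SpaceZ k)).
Proof.
have -> : SigmaA A = \bigcap_(n : nat) (Stp A (Posz n) `&` Stp A (Negz n)).
  apply/seteqP; split => w /=.
    move=> h n _; split.
      by exists (w (Posz n), w (Posz n + 1)); [exact: h | split; apply/fcyl1].
    by exists (w (Negz n), w (Negz n + 1)); [exact: h | split; apply/fcyl1].
  move=> h i.
  have hS : forall j, Stp A j w -> A (w j) (w (j + 1)) = 1.
    by move=> j [s /= hs [/fcyl1 -> /fcyl1 ->]].
  case: i => n; apply: hS; have [] := h n I => //.
apply: bigcapT_measurable => n; apply: measurableI;
  apply: fin_bigcup_measurable; do ?exact: finite_finset;
  by move=> s _; apply: measurableI; apply: mfcyl.
Qed.

Lemma mEcyl (k : nat) (A : 'M[int]_k.+2) i s :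
  measurable (Ecyl A i s : set (SpaceZ k)).
Proof. by apply: measurableI; [apply: mSigmaA | apply: mfcyl]. Qed.

Lemma prob_fin (R : realType) (k : nat) (mu : probability (SpaceZ k) R)
  (X : set (SpaceZ k)) : measurable X ->
  mu X = (fine (mu X))%:E /\ 0 <= fine (mu X) <= 1.
Proof.
move=> mX; have h0 := measure_ge0 mu X; have h1 := probability_le1 mu mX.
have hf : mu X \is a fin_num.
  by rewrite ge0_fin_numE // (le_lt_trans h1) // ltry.
split; first by rewrite fineK.
by rewrite fine_ge0 //= -lee_fin fineK.
Qed.

Lemma muE_shift (R : realType) (k : nat) (A : 'M[int]_k.+2)
  (phi : config k.+2 -> R) (mu : probability (SpaceZ k) R) :
  invariant_gibbs A phi mu -> forall i s, mu (Ecyl A i s) = mu (Ecyl A 0 s).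
Proof.
move=> [_ hinv _] i s.
have step : forall j, mu (Ecyl A (j + 1) s) = mu (Ecyl A j s).
  move=> j; have := preshift_E A 1 j s.
  rewrite (_ : j + 1%:Z = j + 1) // => <-; apply: hinv; exact: mEcyl.
have hn : forall j (n : nat), mu (Ecyl A (j + n%:Z) s) = mu (Ecyl A j s).
  move=> j; elim=> [|n IH]; first by rewrite addr0.
  by rewrite -IH -(step (j + n%:Z)); congr (mu (Ecyl A _ s)); lia.
have e1 : i = - (absz i)%:Z + (absz (i + (absz i)%:Z))%:Z.
  have h0 : 0 <= i + (absz i)%:Z by case: i => n //=; rewrite ?NegzE; lia.
  by rewrite (gez0_abs h0) addrCA addNr addr0.
rewrite e1 hn; have -> : Ecyl A 0 s = Ecyl A (- (absz i)%:Z + (absz i)%:Z) s by rewrite addNr.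
by rewrite hn.
Qed.

Lemma q_pos (R : realType) (k : nat) (A : 'M[int]_k.+2)
  (phi : config k.+2 -> R) (mu : probability (SpaceZ k) R) :
  primitive01 A -> invariant_gibbs A phi mu ->
  forall s, 0 < fine (mu (Ecyl A 0 s)).
Proof.
move=> hprim [_ _ [P [c [c1 hg]]]] s.
have [w [wS w0]] := periodic_point hprim s.
have := hg w 1%N wS (leqnn 1).
rewrite /= => /andP[hlo _].
have e : SigmaA A `&` fcyl 0 (1%:Z - 1) w = Ecyl A 0 s.
  rewrite /Ecyl (_ : 1%:Z - 1 = 0) //; congr (_ `&` _).
  by apply/seteqP; split => v /fcyl1 h; apply/fcyl1; rewrite h.
rewrite e in hlo; apply: lt_le_trans hlo.
apply: mulr_gt0; last exact: expR_gt0.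
by rewrite invr_gt0; apply: lt_le_trans c1.
Qed.

Lemma exists_s0 (R : realType) (k : nat) (A : 'M[int]_k.+2)
  (phi : config k.+2 -> R) (mu : probability (SpaceZ k) R) :
  primitive01 A -> invariant_gibbs A phi mu ->
  exists s, 0 < fine (mu (Ecyl A 0 s)) < 1.
Proof.
move=> hp hg; exists ord0; rewrite (q_pos hp hg) /=.
have h2 := q_pos hp hg (@ord_max k.+1).
have [e1 _] := prob_fin mu (mEcyl A 0 ord0).
have [e2 _] := prob_fin mu (mEcyl A 0 (@ord_max k.+1)).
have hd : Ecyl A 0 ord0 `&` Ecyl A 0 (@ord_max k.+1) = set0.
  apply/seteqP; split => // v [[_ /fcyl1 /= h1] [_ /fcyl1 /= h2']].
  by move: h1; rewrite h2'.
have hU := measureU mu (mEcyl A 0 ord0) (mEcyl A 0 (@ord_max k.+1)) hd.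
have hle : (mu (Ecyl A 0 ord0 `|` Ecyl A 0 (@ord_max k.+1)) <= 1)%E.
  by apply: probability_le1; apply: measurableU; apply: mEcyl.
have hle2 : (mu (Ecyl A 0 ord0) + mu (Ecyl A 0 (@ord_max k.+1)) <= 1)%E.
  by rewrite -hU.
rewrite e1 e2 -EFinD lee_fin in hle2.
lra.
Qed.

Lemma exists_nat_gt (R : realType) (x : R) : exists j : nat, x < j%:R.
Proof. by exists (Num.Def.trunc x).+1; exact: truncnS_gt. Qed.

Lemma series_cst_pinfty (R : realType) (u : (\bar R)^nat) (p : R) :
  0 < p -> (forall n, u n = p%:E) -> (\sum_(0 <= n <oo) u n = +oo)%E.
Proof.
move=> p0 hu.
have hS : forall K : nat, ((p * K%:R)%:E <= \sum_(0 <= n <oo) u n)%E.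
  move=> K; apply: le_trans (nneseries_lim_ge K _).
    rewrite (eq_bigr (fun _ => p%:E)); last by move=> i _; rewrite hu.
    by rewrite sumEFin sumr_const_nat subn0 mulr_natr.
  by move=> n _ _; rewrite hu lee_fin ltW.
move: hS; case: (\sum_(0 <= n <oo) u n)%E => [r| |] // hS.
  have [j hj] := exists_nat_gt (r / p).
  exfalso; have h1 := hS j; rewrite lee_fin in h1.
  rewrite ltr_pdivrMr // in hj; lra.
by have := hS 0%N.
Qed.
Lemma main_construction (R : realType) (k : nat) (A : 'M[int]_k.+2)
  (phi : config k.+2 -> R) (mu : probability (SpaceZ k) R)
  (l : nat -> nat) :
  primitive01 A -> invariant_gibbs A phi mu ->
  (fun n => (l n)%:R : R) @ \oo --> +oo ->
  exists (a : nat -> int) (w : nat -> config k.+2),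
     (\sum_(0 <= n <oo) mu (cyl A (a n) (a n) (w n)) = +oo)%E /\
     (forall n, 0 <= a n /\ 2 * a n <= (l n)%:Z) /\
     ~ SP mu (fun n => cyl A (a n) (a n) (w n)).
Proof.
move=> hp hg hl.
have hN : forall j : nat, exists N0 : nat, forall m, (N0 <= m)%N -> (2 * j <= l m)%N.
  move=> j; have := (proj1 (cvgryPge _) hl) (2 * j)%:R.
  case=> N0 _ hN0; exists N0 => m /hN0 /=; by rewrite ler_nat.
have [N hNP] := choice hN.
have [s0 /andP[p0 p1]] := exists_s0 hp hg.
set p := fine (mu (Ecyl A 0 s0)) in p0 p1.
have hmu : forall i, mu (Ecyl A i s0) = p%:E.
  move=> i; rewrite (muE_shift hg) /p.
  by have [-> _] := prob_fin mu (mEcyl A 0 s0).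
have hmuf : forall i, fine (mu (Ecyl A i s0)) = p by move=> i; rewrite hmu.
exists (fun n => (aseq N n)%:Z), (fun _ => (fun _ => s0) : config k.+2).
have hcyl : forall i, cyl A i i (fun _ => s0) = Ecyl A i s0 by [].
split; [|split].
- apply: (series_cst_pinfty p0) => n; by rewrite hcyl hmu.
- move=> n; split => //.
  have := aseq_bound (l := l) (N := N) n (fun j m h => hNP j m h).
  move: (aseq N n) (l n) => x y; clear; lia.
move=> [C [C0 hC]].
have [j1 hj1] := exists_nat_gt (C / (1 - p)).
set j0 := j1.+1.
have hj0 : C / (1 - p) < j0%:R.
  by apply: lt_le_trans hj1 _; rewrite ler_nat /j0.
set M' := Np N j0; set Nn := (Np N j0 + j0).-1.
have [hM1 hMN hlen] := blk_facts N (ltn0Sn j1).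
have hblk : forall m, (M' <= m < Nn.+1)%N ->
    preshift m (cyl A (aseq N m)%:Z (aseq N m)%:Z (fun _ => s0)) = Ecyl A Nn%:Z s0.
  move=> m hm; rewrite hcyl preshift_E; congr (Ecyl A _ s0).
  by rewrite -PoszD (blk_a (ltn0Sn j1) hm).
have hR : forall m n, (M' <= m < Nn.+1)%N -> (M' <= n < Nn.+1)%N ->
    Rmn mu (fun n => cyl A (aseq N n)%:Z (aseq N n)%:Z (fun _ => s0)) m n
      = p - p * p.
  move=> m n hm hn; rewrite /Rmn (hblk m hm) (hblk n hn) setIid hmuf.
  by rewrite !hcyl !hmuf.
have := hC M' Nn hM1 hMN.
rewrite (eq_big_nat _ _ (F2 := fun _ => (p - p * p) *+ j0)); last first.
  move=> m hm; rewrite (eq_big_nat _ _ (F2 := fun _ => p - p * p)).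
    by rewrite sumr_const_nat hlen.
  by move=> n hn; apply: hR.
rewrite sumr_const_nat hlen.
rewrite (eq_big_nat _ _ (F2 := fun _ => p)); last first.
  by move=> n hn; rewrite hcyl hmuf.
rewrite sumr_const_nat hlen -(mulr_natr (p - p * p) j0).
rewrite -(mulr_natr ((p - p * p) * j0%:R) j0) -(mulr_natr p j0).
have hJ : 0 < j0%:R :> R by rewrite ltr0n.
rewrite ltr_pdivrMr ?subr_gt0 // in hj0.
move=> hle.
have hpos : 0 < (p * j0%:R) * (j0%:R * (1 - p) - C) by rewrite mulr_gt0 ?subr_gt0 // mulr_gt0.
have e : (p * j0%:R) * (j0%:R * (1 - p) - C)
    = (p - p * p) * j0%:R * j0%:R - C * (p * j0%:R) by ring.
by move: hpos; rewrite e subr_gt0 ltNge hle.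
Qed.

Theorem theorem2p2 (R : realType) (k : nat) (A : 'M[int]_k.+2)
  (phi : config k.+2 -> R) (mu : probability (SpaceZ k) R)
  (l : nat -> nat) :
  primitive01 A -> holder_potential A phi -> invariant_gibbs A phi mu ->
  (fun n => (l n)%:R : R) @ \oo --> +oo ->
  (exists (a b : nat -> int) (w : nat -> config k.+2),
     (forall n, a n <= b n) /\
     (\sum_(0 <= n <oo) mu (cyl A (a n) (b n) (w n)) = +oo)%E /\
     centered a b l /\
     ~ SP mu (fun n => cyl A (a n) (b n) (w n))) /\
  (exists (a b : nat -> int) (w : nat -> config k.+2),
     (forall n, a n <= b n) /\
     (\sum_(0 <= n <oo) mu (cyl A (a n) (b n) (w n)) = +oo)%E /\
     aligned a l /\
     ~ SP mu (fun n => cyl A (a n) (b n) (w n))).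
Proof.
move=> hp _ hg hl.
have [a [w [hs [hb hnsp]]]] := main_construction hp hg hl.
split; exists a, a, w; (split; [by move=> n|]); split => //; split => // n;
  have [h0 h2] := hb n; move: h0 h2; move: (a n) (l n) => x y h0 h2; clear -h0 h2.
  by rewrite ger0_norm; lia.
by apply/andP; split => //; lia.
Qed.
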